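(* Let $(S,E,f)$ be a reduced and closed observation table for $U$ and $D$ as defined below. If $|S|=\mathit{Ind}(\sim_{U,D})$, then $\mathcal{T}_{S,f}$ is isomorphic to $\mathcal{T}_{U,D}$.
   Context: $\Sigma$ is a finite alphabet, $U\subseteq\Sigma^\omega$ an $\omega$-language recognizable by a weak deterministic Büchi automaton, and $D\subseteq\Sigma^\omega$ a regular set with trivial right-congruence (i.e. for all $w\in\Sigma^*,\alpha\in\Sigma^\omega$: $\alpha\in D\iff w\alpha\in D$). $w\sim_{U,D}w'$ iff for all $\alpha\in\Sigma^\omega\setminus D$: $w\alpha\in U\iff w'\alpha\in U$; it is a right-congruence, $\mathit{Ind}(\sim_{U,D})$ is its number of classes, and $\mathcal{T}_{U,D}$ is its induced transition system (states the classes $[u]$, initial $[\epsilon]$, transitions $[u]\xrightarrow{\sigma}[u\sigma]$). An observation table $(S,E,f)$ consists of a prefix-closed finite $S\subseteq\Sigma^*$, a suffix-closed finite set $E$ of ultimately periodic words with $E\cap D=\emptyset$, and $f:(S\cup S\Sigma)\times E\to\{\text{yes},\text{no}\}$ with $f(s,\alpha)=\text{yes}$ iff $s\alpha\in U$. For $s\in S\cup S\Sigma$ let $f_s:E\to\{\text{yes},\text{no}\}$, $f_s(\alpha)=f(s,\alpha)$. The table is reduced if $f_s\neq f_t$ for distinct $s,t\in S$, and closed if for every $s\in S\Sigma$ there is $t\in S$ with $f_s=f_t$. For a reduced closed table, $\mathcal{T}_{S,f}=(\Sigma,S,\delta_f,\epsilon)$ with $\delta_f(s,\sigma)$ the unique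 $t\in S$ with $f_{s\sigma}=f_t$. *)

(* Defs.v *)
From mathcomp Require Import all_boot.
From Stdlib Require Import ClassicalEpsilon.
From Stdlib Require List.
Notation In := List.In.
Set Implicit Arguments.
Unset Strict Implicit.
Unset Printing Implicit Defensive.

Section Omega.
Variable Sigma : finType.

Definition oword := nat -> Sigma.

Definition wcat (w : seq Sigma) (a : oword) : oword :=
  fun n => if n < size w then nth (a 0) w n else a (n - size w).

Definition inf_often (P : nat -> Prop) := forall N, exists n, N <= n /\ P n.

Record DBA := { dQ : finType; dq0 : dQ; dd : dQ -> Sigma -> dQ; dF : pred dQ }.
Arguments dq0 : clear implicits. Arguments dd : clear implicits. Arguments dF : clear implicits.

Fixpoint drun (A : DBA) (a : oword) (n : nat) : dQ A :=
  match n with 0 => dq0 A | n'.+1 => dd A (drun A a n') (a n') end.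

Definition dba_lang (A : DBA) (a : oword) : Prop :=
  inf_often (fun n => dF A (drun A a n)).

(** weak: every strongly connected component is entirely accepting or
    entirely rejecting *)
Definition dba_weak (A : DBA) : Prop :=
  forall q q' : dQ A,
    (exists w, foldl (dd A) q w = q') -> (exists w, foldl (dd A) q' w = q) ->
    dF A q = dF A q'.

Definition weak_det_buchi_recognizable (L : oword -> Prop) : Prop :=
  exists A : DBA, dba_weak A /\ forall a, L a <-> dba_lang A a.

Record NBA := { nQ : finType; nI : pred nQ; nd : nQ -> Sigma -> pred nQ; nF : pred nQ }.
Arguments nI : clear implicits. Arguments nd : clear implicits. Arguments nF : clear implicits.

Definition nba_lang (A : NBA) (a : oword) : Prop :=
  exists r : nat -> nQ A,
    nI A (r 0) /\ (forall n, nd A (r n) (a n) (r n.+1)) /\ inf_often (fun n => nF A (r n)).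

Definition omega_regular (L : oword -> Prop) : Prop :=
  exists A : NBA, forall a, L a <-> nba_lang A a.

Definition trivial_rc (D : oword -> Prop) : Prop :=
  forall w a, D a <-> D (wcat w a).

Definition sim (U D : oword -> Prop) (w w' : seq Sigma) : Prop :=
  forall a, ~ D a -> (U (wcat w a) <-> U (wcat w' a)).

Definition cls (U D : oword -> Prop) (u : seq Sigma) : seq Sigma -> Prop :=
  fun w => sim U D w u.

Definition index_is (R : seq Sigma -> seq Sigma -> Prop) (n : nat) : Prop :=
  exists c : seq Sigma -> 'I_n,
    (forall w w', c w = c w' <-> R w w') /\ (forall i, exists w, c w = i).

Definition ult_periodic (a : oword) : Prop :=
  exists k p, 0 < p /\ forall n, k <= n -> a (n + p) = a n.

(** observation table (S,E,f) for U and D; the finite set S is given as a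
    duplicate-free list, E as a list of omega-words. *)
Definition obs_table (U D : oword -> Prop) (S : seq (seq Sigma)) (E : list oword)
    (f : seq Sigma -> oword -> bool) : Prop :=
  uniq S /\
  [/\ (forall s, s \in S -> forall k, take k s \in S),
      (forall a, In a E -> ult_periodic a),
      (forall a, In a E -> forall k, exists b, In b E /\ forall n, b n = a (k + n)),
      (forall a, In a E -> ~ D a) &
      (forall s a, (s \in S \/ exists s' x, s' \in S /\ s = rcons s' x) -> In a E ->
         (f s a = true <-> U (wcat s a)))].

Definition row_eq (E : list oword) (f : seq Sigma -> oword -> bool) (s t : seq Sigma) :=
  forall a, In a E -> f s a = f t a.

Definition obs_reduced (S : seq (seq Sigma)) E f : Prop :=
  forall s t, s \in S -> t \in S -> s <> t -> ~ row_eq E f s t.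

Definition obs_closed (S : seq (seq Sigma)) E f : Prop :=
  forall s x, s \in S -> exists t, t \in S /\ row_eq E f (rcons s x) t.

(** transition systems: states are the elements of Q satisfying tstate *)
Record TS := { tQ : Type; tstate : tQ -> Prop; tinit : tQ; ttrans : tQ -> Sigma -> tQ }.

Definition ts_iso (A B : TS) : Prop :=
  exists h : tQ A -> tQ B,
    [/\ (forall a, tstate a -> tstate (h a)),
        (forall a a', tstate a -> tstate a' -> h a = h a' -> a = a'),
        (forall b, tstate b -> exists a, tstate a /\ h a = b),
        h (tinit A) = tinit B &
        (forall a x, tstate a -> h (ttrans a x) = ttrans (h a) x)].

(** delta_f(s,x) = the (unique, for reduced closed tables) t in S with f_{sx} = f_t *)
Definition delta_f (S : seq (seq Sigma)) (E : list oword) (f : seq Sigma -> oword -> bool)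
    (s : seq Sigma) (x : Sigma) : seq Sigma :=
  nth [::] S (find (fun t => all (fun a => f t a == f (rcons s x) a) E) S).

Definition T_Sf S E f : TS :=
  {| tQ := seq Sigma; tstate := fun s => s \in S; tinit := [::]; ttrans := delta_f S E f |}.

Definition repr_cls (U D : oword -> Prop) (C : seq Sigma -> Prop) : seq Sigma :=
  epsilon (inhabits [::]) (fun u => C = cls U D u).

Definition T_UD (U D : oword -> Prop) : TS :=
  {| tQ := seq Sigma -> Prop;
     tstate := fun C => exists u, C = cls U D u;
     tinit := cls U D [::];
     ttrans := fun C x => cls U D (rcons (repr_cls U D C) x) |}.

End Omega.

(* Main.v *)
Require Import Defs.
From mathcomp Require Import all_boot.
From Stdlib Require Import ClassicalEpsilon FunctionalExtensionality PropExtensionality.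
Set Implicit Arguments.
Unset Strict Implicit.

Section H.
Variable Sigma : finType.
Implicit Types (U D : oword Sigma -> Prop).

Lemma sim_refl U D w : sim U D w w.
Proof. by move=> a _. Qed.
Lemma sim_sym U D w w' : sim U D w w' -> sim U D w' w.
Proof. move=> H a Ha; split; apply (H a Ha). Qed.
Lemma sim_trans U D w1 w2 w3 : sim U D w1 w2 -> sim U D w2 w3 -> sim U D w1 w3.
Proof. move=> H1 H2 a Ha; split => h; [apply (H2 a Ha), (H1 a Ha) | apply (H1 a Ha), (H2 a Ha)]; done. Qed.

Lemma cls_eq U D s u : sim U D s u -> cls U D s = cls U D u.
Proof.
move=> H; apply: functional_extensionality => w; apply: propositional_extensionality.
rewrite /cls; split => h; [exact: sim_trans h H | exact: sim_trans h (sim_sym H)].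
Qed.

Lemma eq_cls U D s u : cls U D s = cls U D u -> sim U D s u.
Proof.
move=> H; have := f_equal (fun C => C s) H; rewrite /cls => <-; exact: sim_refl.
Qed.

Lemma wcat_rcons (s : seq Sigma) x (a : oword Sigma) :
  wcat (rcons s x) a = wcat s (wcat [:: x] a).
Proof.
apply: functional_extensionality => n; rewrite /wcat size_rcons /= nth_rcons.
case: (ltnP n (size s)) => hn.
  by rewrite ltnW ?ltnS ?hn //; apply: set_nth_default.
case: (leqP n (size s)) => hn2.
  have e : n = size s by apply/eqP; rewrite eqn_leq hn2 hn.
  by subst n; rewrite ltnSn eqxx subnn.
rewrite ltnS leqNgt hn2 /= ifF; last by apply/negbTE; rewrite -leqNgt subn_gt0.
by rewrite -addn1 subnDA.
Qed.

Lemma sim_rcons U D s t x : trivial_rc D -> sim U D s t -> sim U D (rcons s x) (rcons t x).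
Proof.
move=> hD H a Ha; rewrite !wcat_rcons; apply: H => h; apply: Ha.
by apply/(hD [:: x] a).
Qed.

Lemma all_In (p : pred (oword Sigma)) E a : all p E -> In a E -> p a.
Proof.
elim: E => //= b E IH /andP [pb pE] [<- // | h]; exact: IH.
Qed.

Lemma In_all (p : pred (oword Sigma)) E : (forall a, In a E -> p a) -> all p E.
Proof.
elim: E => //= b E IH h; apply/andP; split; [apply: h; left | apply: IH => a ha; apply: h; right]; done.
Qed.

End H.

Theorem lemma5 (Sigma : finType) (U D : oword Sigma -> Prop)
    (S : seq (seq Sigma)) (E : list (oword Sigma))
    (f : seq Sigma -> oword Sigma -> bool) :
  weak_det_buchi_recognizable U ->
  omega_regular D -> trivial_rc D ->
  obs_table U D S E f -> obs_reduced S E f -> obs_closed S E f ->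
  index_is (sim U D) (size S) ->
  ts_iso (T_Sf S E f) (T_UD U D).
Proof.
move=> _ _ hD [uS [_ _ _ hED hf]] hred hcl [c [hc hcs]].
pose ok s := s \in S \/ exists s' x, s' \in S /\ s = rcons s' x.
have simrow : forall s t, ok s -> ok t -> sim U D s t -> row_eq E f s t.
  move=> s t os ot H a ha; have na := hED a ha.
  apply/Bool.eq_true_iff_eq; split => h.
  - by apply/(hf t a ot ha); apply/(H a na); apply/(hf s a os ha).
  - by apply/(hf s a os ha); apply/(H a na); apply/(hf t a ot ha).
have injS : forall s t, s \in S -> t \in S -> sim U D s t -> s = t.
  move=> s t hs ht H; case: (eqVneq s t) => // /eqP nst; exfalso.
  by apply: (hred s t hs ht nst); apply: simrow; [left|left|].
have surjS : forall u, exists2 s, s \in S & sim U D s u.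
  move=> u; suff : c u \in map c S.
    by case/mapP => s hs /esym /hc; exists s.
  apply/negPn/negP => hn.
  have uq : uniq (c u :: map c S).
    rewrite /= hn map_inj_in_uniq // => s t hs ht /hc; exact: injS.
  have := max_card (mem (c u :: map c S)).
  by rewrite (card_uniqP uq) card_ord /= size_map ltnn.
exists (cls U D); split => //=.
- by move=> a _; exists a.
- by move=> a a' ha ha' H; apply: injS => //; exact: eq_cls H.
- move=> b [u ->]; case: (surjS u) => s hs hsu; exists s; split => //.
  exact: cls_eq.
- move=> s x hs.
  set r := repr_cls U D (cls U D s).
  have hr : cls U D s = cls U D r.
    rewrite /r /repr_cls; apply: (epsilon_spec (inhabits [::]) (fun u => cls U D s = cls U D u)); by exists s.
  rewrite /= -(cls_eq (sim_rcons x hD (eq_cls hr))).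
  case: (surjS (rcons s x)) => t' ht' ht'sim.
  have rt' : row_eq E f t' (rcons s x).
    by apply: simrow => //; [left | right; exists s, x].
  have hhas : has (fun t => all (fun a => f t a == f (rcons s x) a) E) S.
    apply/hasP; exists t' => //; apply: In_all => a ha; apply/eqP; exact: rt'.
  have hfind := nth_find [::] hhas.
  have hin : delta_f S E f s x \in S by rewrite /delta_f mem_nth // -has_find.
  have rt : row_eq E f (delta_f S E f s x) (rcons s x).
    by move=> a ha; apply/eqP; exact: (all_In hfind ha).
  have -> : delta_f S E f s x = t'.
    case: (eqVneq (delta_f S E f s x) t') => // /eqP ne; exfalso.
    apply: (hred _ _ hin ht' ne) => a ha; rewrite (rt a ha) (rt' a ha) //.
  exact: cls_eq.
Qed.
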